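(* Let $f\colon\mathbb R\to\mathbb R$ be continuous with $|f(x)|\leqslant a\cosh(bx)$ for all $x$, for some $a>0$, $b\in\mathbb R$. Fix $\lambda>0$. Let $\rho$ be a compactly supported Borel probability measure on $\mathbb R$, let $d>0$ be such that $\operatorname{supp}\rho\subset[-d,d]$, and for $n\geqslant1$ let $I^\rho_n=[-nd,nd]$, whose length is $L(I^\rho_n)=2nd$. Then for every $\epsilon>0$ there exists $n_0>0$ such that, for every $x\in\operatorname{supp}\rho$, $$\sum_{n=n_0}^\infty\frac{e^{-\lambda}\lambda^n}{(n+1)!}\Big\langle\delta_x*\rho^{*n},\ |f|+\epsilon+a\cosh\big(bL(I^\rho_{n_0})\big)\Big\rangle<\epsilon,$$ and $$\sum_{n=n_0}^\infty\frac{e^{-\lambda}\lambda^n}{(n+1)!}\Big\langle\rho^{*(n+1)},\ |f|+\epsilon+a\cosh\big(bL(I^\rho_{n_0})\big)\Big\rangle<\epsilon.$$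
   Context: $\langle\tau,\phi\rangle=\int\phi\,d\tau$; $*$ is convolution of measures, $\rho^{*n}$ the $n$-th convolution power with $\rho^{*0}=\delta_0$; $\delta_a$ is the Dirac measure at $a$. *)

(* Defs.v *)
From HB Require Import structures.
From mathcomp Require Import all_boot all_order all_algebra.
From mathcomp Require Import all_classical all_reals all_analysis.
Set Implicit Arguments. Unset Strict Implicit. Unset Printing Implicit Defensive.
Import Order.TTheory GRing.Theory Num.Theory.
Import numFieldNormedType.Exports.
Local Open Scope classical_set_scope.
Local Open Scope ring_scope.

Definition cosh {R : realType} (x : R) : R := (expR x + expR (- x)) / 2.

(* support of a (Borel) measure on R: points all of whose open balls have
   positive measure (= smallest closed set of full measure) *)
Definition msupport {R : realType} (mu : set R -> \bar R) : set R :=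
  [set x | forall e : R, 0 < e -> (0 < mu (ball x e))%E].

(* pairing <delta_x * rho^{*n}, phi> = \int...\int phi(x+y1+...+yn) drho(y1)...drho(yn),
   defined recursively; rho^{*0} = delta_0 so n = 0 gives phi x. *)
Fixpoint dirac_conv_pow {R : realType} (rho : {measure set R -> \bar R})
  (x : R) (n : nat) (phi : R -> \bar R) : \bar R :=
  match n with
  | 0%N => phi x
  | n'.+1 => (\int[rho]_y dirac_conv_pow rho (x + y) n' phi)%E
  end.

(* <rho^{*n}, phi> = <delta_0 * rho^{*n}, phi> *)
Definition conv_pow {R : realType} (rho : {measure set R -> \bar R})
  (n : nat) (phi : R -> \bar R) : \bar R := dirac_conv_pow rho 0 n phi.

(* Main.v *)
Require Import Defs.
From HB Require Import structures.
From mathcomp Require Import all_boot all_order all_algebra.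
From mathcomp Require Import all_classical all_reals all_analysis.
Import Order.TTheory GRing.Theory Num.Theory.
Import numFieldNormedType.Exports.
Local Open Scope classical_set_scope.
Local Open Scope ring_scope.
From mathcomp Require Import measurable_realfun lra ring.

Lemma null_out (R : realType) (rho : probability R R) (d : R) :
  msupport rho `<=` `[-d, d] -> rho (~` `[-d, d]) = 0%E.
Proof.
move=> sd.
pose B (n : nat) : set R := if @unpickle (rat * rat)%type n is Some (c, r) then
  (if rho (ball (ratr c : R) (ratr r)) == 0%E then ball (ratr c : R) (ratr r) else set0) else set0.
have mB n : measurable (B n).
  rewrite /B; case: unpickle => [[c r]|] //; case: ifP => _ //; exact: measurable_ball.
have B0 n : rho (B n) = 0%E.
  rewrite /B; case: unpickle => [[c r]|] /=; last by rewrite measure0.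
  by case: ifP => [/eqP //|_]; rewrite measure0.
have cov : ~` `[-d, d] `<=` \bigcup_n B n.
  move=> z zd.
  have : ~ msupport rho z by move=> /sd.
  move=> /existsNP[e] /not_implyP[e0 /negP]; rewrite -leNgt => rhoe.
  have rhoe0 : rho (ball z e) = 0%E by apply/eqP; rewrite eq_le rhoe measure_ge0.
  have [c /andP[c1 c2]] : exists c : rat, ratr c \in `](z - e / 4), (z + e / 4)[.
    by apply: rat_in_itvoo; lra.
  have [r /andP[r1 r2]] : exists r : rat, ratr r \in `](e / 4), (e / 2)[.
    by apply: rat_in_itvoo; lra.
  move: c1 c2 r1 r2; rewrite !bnd_simp => c1 c2 r1 r2.
  have sub : ball (ratr c : R) (ratr r) `<=` ball z e.
    move=> w; rewrite /ball /= => hw.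
    move: hw; rewrite !ltr_distlC => /andP[h1 h2]; apply/andP; split.
    lra. lra.
  exists (pickle (c, r)); first by []. rewrite /B pickleK.
  have -> : rho (ball (ratr c : R) (ratr r)) == 0%E.
    rewrite eq_le measure_ge0 andbT -rhoe0; apply: le_measure => //; rewrite inE; exact: measurable_ball.
  rewrite /ball /= ltr_distlC; apply/andP; split.
  lra. lra.
apply/eqP; rewrite eq_le measure_ge0 andbT.
have := @measure_sigma_subadditive _ _ _ rho _ _ mB _ cov.
rewrite eseries0; last by move=> i _ _; exact: B0.
move=> h; apply: h; apply: measurableC; exact: measurable_itv.
Qed.

Section ae.
Local Open Scope ereal_scope.

Lemma le_int_nm (R : realType) (mu : {measure set R -> \bar R}) (f g : R -> \bar R) :
  (forall x, 0 <= f x) -> (forall x, f x <= g x) ->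
  \int[mu]_x f x <= \int[mu]_x g x.
Proof.
move=> f0 fg.
have g0 x : 0 <= g x by apply: le_trans (f0 x) (fg x).
rewrite !ge0_integralTE //; apply: ereal_sup_le => _ [h hf <-].
by exists h => // x; apply: le_trans (hf x) (fg x).
Qed.

Lemma ae_bound (R : realType) (mu : probability R R) (S : set R) (g : R -> \bar R) (C : R) :
  measurable S -> mu (~` S) = 0 -> (0 <= C)%R -> (forall y, 0 <= g y) ->
  (forall y, S y -> g y <= C%:E) -> \int[mu]_y g y <= C%:E.
Proof.
move=> mS nS C0 g0 gC.
pose M y := if y \in S then C%:E else +oo.
have gM y : g y <= M y.
  rewrite /M; case: ifP => [/set_mem/gC //|_]; exact: leey.
apply: le_trans (@le_int_nm _ mu _ _ g0 gM) _.
have mM : measurable_fun setT M.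
  apply: measurable_fun_ifT => //.
  apply: (@measurable_fun_bool _ _ _ _ true).
  rewrite setTI (_ : _ @^-1` _ = S) //.
  by apply/seteqP; split => y /=; [move/set_mem | move/mem_set].
rewrite -(setUv S) integral_setU //; last first.
- by apply/eqP; rewrite setICr.
- by rewrite setUv.
- by apply: measurableC.
rewrite [X in _ + X]null_set_integral //; last 2 first.
- by apply: measurableC.
- by apply: measurable_funS mM.
rewrite adde0 (eq_integral (cst C%:E)); last first.
  by move=> y yS; rewrite /M yS.
rewrite integral_cst //.
rewrite -[leRHS]mule1; apply: lee_pmul => //.
exact: probability_le1.
Qed.

End ae.

Lemma dcp_bound (R : realType) (rho : probability R R) (d a c K : R) (phi : R -> \bar R) :
  0 <= d -> 0 <= a -> 0 <= c -> 0 <= K -> rho (~` `[-d, d]) = 0%E ->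
  (forall y, 0 <= phi y /\ phi y <= (a * expR (c * `|y|) + K)%:E)%E ->
  forall n z, (0 <= dirac_conv_pow rho z n phi /\
     dirac_conv_pow rho z n phi <= (a * expR (c * (`|z| + n%:R * d)) + K)%:E)%E.
Proof.
move=> d0 a0 c0 K0 nd phiB n; elim: n => [|n IH] z /=.
  by rewrite mul0r addr0; exact: phiB.
split.
  by apply: integral_ge0 => y _; exact: (IH _).1.
apply: (@ae_bound _ _ `[-d, d]) => //.
- by rewrite addr_ge0 // mulr_ge0 // expR_ge0.
- by move=> y; exact: (IH _).1.
move=> y; rewrite /= in_itv /= => /andP[y1 y2].
apply: le_trans (IH _).2 _; rewrite lee_fin lerD2r ler_wpM2l // ler_expR ler_wpM2l //.
have := ler_normD z y; have : `|y| <= d by rewrite ler_norml y1 y2.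
rewrite -natr1 mulrDl mul1r; lra.
Qed.

Lemma cosh_le (R : realType) (x : R) : cosh x <= expR `|x|.
Proof.
rewrite /cosh; have [x0|x0] := leP 0 x.
  rewrite ger0_norm //; have : expR (- x) <= expR x by rewrite ler_expR; lra.
  lra.
rewrite ltr0_norm //; have : expR x <= expR (- x) by rewrite ler_expR; lra.
lra.
Qed.

Lemma pow_fact_le (R : realType) (x : R) n : 0 <= x -> x ^+ n / n`!%:R <= expR x.
Proof.
move=> x0; case: n => [|n].
  rewrite expr0 fact0 divr1; have := expR_ge1Dx x; lra.
have := expR_ge1Dxn n x0; lra.
Qed.

Lemma geo_tail (R : realType) (Q : R) m N : 0 <= Q ->
  \sum_(m <= i < N) Q * (2^-1) ^+ i <= 2 * Q * (2^-1) ^+ m.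
Proof.
move=> Q0; have [Nm|mN] := leqP N m.
  by rewrite big_geq // mulr_ge0 // ?mulr_ge0 // exprn_ge0.
have [k ->] : exists k, N = (m + k)%N by exists (N - m)%N; rewrite subnKC // ltnW.
have -> : \sum_(m <= i < m + k) Q * (2^-1) ^+ i = 2 * Q * (2^-1) ^+ m - 2 * Q * (2^-1) ^+ (m + k).
  elim: k => [|k IH]; first by rewrite addn0 big_geq // subrr.
  rewrite addnS big_nat_recr /=; last by rewrite leq_addr.
  rewrite IH exprS; set t := (2^-1) ^+ (m + k); by field.
have : 0 <= 2 * Q * (2^-1) ^+ (m + k) by rewrite mulr_ge0 // ?mulr_ge0 // exprn_ge0.
lra.
Qed.

Lemma term_bound (R : realType) (a b d eps lam : R) (n0 n : nat) :
  0 < a -> 0 < d -> 0 < eps -> 0 < lam -> (n0 <= n)%N ->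
  expR (- lam) * lam ^+ n / (n.+1)`!%:R *
    (a * expR (`|b| * (n.+1%:R * d)) + (eps + a * cosh (b * (2 * n0%:R * d))))
  <= (2 * a + eps) * expR (2 * (`|b| * d)) * expR (2 * (lam * expR (2 * (`|b| * d))))
     * (2^-1) ^+ n.
Proof.
move=> a0 d0 e0 l0 nn0.
set E := expR (2 * (`|b| * d)).
have u0 : 0 <= `|b| * d by rewrite mulr_ge0 // ltW.
have E1 : 1 <= E by rewrite /E; have := expR_ge1Dx (2 * (`|b| * d)); lra.
have F : E ^+ n.+1 = expR (n.+1%:R * (2 * (`|b| * d))) by rewrite expRM_natl.
have hn : (n0%:R : R) <= n.+1%:R by rewrite ler_nat; exact: leqW.
have h1 : expR (`|b| * (n.+1%:R * d)) <= E ^+ n.+1.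
  rewrite F ler_expR; have : 0 <= n.+1%:R * (`|b| * d) :> R by rewrite mulr_ge0.
  rewrite mulrA (mulrC `|b|) -mulrA; lra.
have h2 : cosh (b * (2 * n0%:R * d)) <= E ^+ n.+1.
  apply: le_trans (cosh_le _ _) _; rewrite F ler_expR.
  rewrite normrM (ger0_norm (_ : 0 <= 2 * n0%:R * d)); last by rewrite mulr_ge0 // ltW.
  have : n0%:R * (`|b| * d) <= n.+1%:R * (`|b| * d) :> R by rewrite ler_wpM2r.
  have -> : `|b| * (2 * n0%:R * d) = 2 * (n0%:R * (`|b| * d)) by ring.
  have -> : n.+1%:R * (2 * (`|b| * d)) = 2 * (n.+1%:R * (`|b| * d)) :> R by ring.
  lra.
have E'1 : 1 <= E ^+ n.+1 by rewrite exprn_ege1.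
set X := expR _ in h1; set Y := cosh _ in h2; set Z := E ^+ n.+1 in E'1 h1 h2 F *.
have hB : a * X + (eps + a * Y) <= (2 * a + eps) * Z by nra.
have hw : expR (- lam) * lam ^+ n / (n.+1)`!%:R <= lam ^+ n / n`!%:R.
  apply: (@le_trans _ _ (lam ^+ n / (n.+1)`!%:R)).
    rewrite -mulrA; apply: ler_piMl; first by rewrite divr_ge0 ?exprn_ge0 ?ltW.
    by rewrite expR_le1 oppr_le0 ltW.
  rewrite ler_pdivrMr ?ltr0n ?fact_gt0 // mulrAC ler_pdivlMr ?ltr0n ?fact_gt0 //.
  by apply: ler_wpM2l; [rewrite exprn_ge0 // ltW | rewrite ler_nat factS leq_pmull].
have hw0 : 0 <= expR (- lam) * lam ^+ n / (n.+1)`!%:R.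
  by rewrite mulr_ge0 ?invr_ge0 ?ler0n // mulr_ge0 ?expR_ge0 // exprn_ge0 // ltW.
apply: le_trans (ler_pM hw0 _ hw hB) _.
  have X0 : 0 <= X by rewrite /X expR_ge0.
  have Y0 : 0 <= Y by rewrite /Y /cosh divr_ge0 // addr_ge0 // expR_ge0.
  nra.
have E0 : 0 <= E by rewrite /E expR_ge0.
have hP := @pow_fact_le _ (2 * (lam * E)) n.
have -> : lam ^+ n / n`!%:R * ((2 * a + eps) * Z) =
   (2 * a + eps) * E * ((2 * (lam * E)) ^+ n / n`!%:R) * (2^-1) ^+ n.
  rewrite /Z exprSr !exprMn exprVn; field.
  by rewrite expf_neq0 ?pnatr_eq0 //= -lt0n fact_gt0.
apply: ler_wpM2r; first by rewrite exprn_ge0.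
apply: ler_wpM2l; first by rewrite mulr_ge0 // addr_ge0 // ?mulr_ge0 // ltW.
apply: hP; apply: mulr_ge0 => //; apply: mulr_ge0 => //; exact: ltW.
Qed.

Theorem lemma2 (R : realType) (f : R -> R) (a b lambda : R)
  (rho : probability R R) (d : R) :
  continuous f ->
  0 < a ->
  (forall x, `|f x| <= a * cosh (b * x)) ->
  0 < lambda ->
  compact (msupport rho) ->
  0 < d ->
  msupport rho `<=` `[- d, d] ->
  forall eps : R, 0 < eps ->
  exists n0 : nat, (0 < n0)%N /\
    let phi := fun y : R => (`|f y| + eps + a * cosh (b * (2 * n0%:R * d)))%:E in
    (forall x, msupport rho x ->
      (\sum_(n0 <= n <oo)
         (expR (- lambda) * lambda ^+ n / (n.+1)`!%:R)%:E
           * dirac_conv_pow rho x n phi < eps%:E)%E)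
    /\
    (\sum_(n0 <= n <oo)
         (expR (- lambda) * lambda ^+ n / (n.+1)`!%:R)%:E
           * conv_pow rho n.+1 phi < eps%:E)%E.
Proof.
move=> cf a0 hf l0 _ d0 sd eps e0.
have nd := @null_out _ rho d sd.
set E := expR (2 * (`|b| * d)).
set Q := (2 * a + eps) * E * expR (2 * (lambda * E)).
have Q0 : 0 <= Q.
  by rewrite !mulr_ge0 ?expR_ge0 // addr_ge0 // ?mulr_ge0 // ltW.
pose N := (Num.Def.truncn (2 * Q / eps)).+1.
have hN : 2 * Q / eps < N%:R := truncnS_gt _.
exists N; split => //.
move=> phi.
set K := eps + a * cosh (b * (2 * N%:R * d)).
have K0 : 0 <= K.
  apply: addr_ge0; first exact: ltW.
  apply: mulr_ge0; first exact: ltW.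
  by rewrite /cosh divr_ge0 // addr_ge0 // expR_ge0.
have phiB : forall y, (0 <= phi y /\ phi y <= (a * expR (`|b| * `|y|) + K)%:E)%E.
  move=> y; rewrite /phi !lee_fin; split.
    by rewrite -addrA addr_ge0.
  have := hf y; have := cosh_le _ (b * y); rewrite normrM => h1 h2.
  have : a * cosh (b * y) <= a * expR (`|b| * `|y|) by rewrite ler_wpM2l // ltW.
  rewrite /K; lra.
have B := @dcp_bound _ rho d a `|b| K phi (ltW d0) (ltW a0) (normr_ge0 b) K0 nd phiB.
have main : forall I : nat -> \bar R,
    (forall n, (0 <= I n)%E /\ (I n <= (a * expR (`|b| * (n.+1%:R * d)) + K)%:E)%E) ->
    (\sum_(N <= n <oo) (expR (- lambda) * lambda ^+ n / (n.+1)`!%:R)%:E * I n < eps%:E)%E.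
  move=> I hI.
  have w0 n : 0 <= expR (- lambda) * lambda ^+ n / (n.+1)`!%:R.
    by rewrite mulr_ge0 ?invr_ge0 ?ler0n // mulr_ge0 ?expR_ge0 // exprn_ge0 // ltW.
  have u0 : forall n, (N <= n)%N ->
      (0 <= (expR (- lambda) * lambda ^+ n / (n.+1)`!%:R)%:E * I n)%E.
    by move=> n _; apply: mule_ge0; [rewrite lee_fin | exact: (hI n).1].
  apply: (@le_lt_trans _ _ (2 * Q * (2^-1) ^+ N)%:E).
    apply: lime_le; first exact: is_cvg_ereal_nneg_natsum u0.
    apply: nearW => M.
    apply: (@le_trans _ _ (\sum_(N <= i < M) (Q * (2^-1) ^+ i)%:E)%E).
      rewrite big_nat_cond [leRHS]big_nat_cond; apply: lee_sum => i /andP[/andP[Ni _] _].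
      apply: le_trans (lee_wpmul2l _ (hI i).2) _; first by rewrite lee_fin.
      rewrite -EFinM lee_fin; exact: term_bound.
    rewrite sumEFin lee_fin; exact: geo_tail.
  rewrite lte_fin.
  have h2N : (N%:R : R) < 2 ^+ N by rewrite -natrX ltr_nat ltn_expl.
  move: hN; rewrite ltr_pdivrMr // => hN.
  rewrite exprVn ltr_pdivrMr ?exprn_gt0 //.
  apply: lt_trans hN _; rewrite mulrC ltr_pM2l //.
split.
  move=> x sx; apply: main => n; split; first exact: (B n x).1.
  apply: le_trans (B n x).2 _; rewrite lee_fin lerD2r.
  apply: ler_wpM2l; first exact: ltW.
  rewrite ler_expR; apply: ler_wpM2l => //.
  have := sd x sx; rewrite /= in_itv /= => /andP[x1 x2].
  have : `|x| <= d by rewrite ler_norml x1 x2.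
  rewrite -natr1 mulrDl mul1r; lra.
apply: main => n; rewrite /conv_pow; have := B n.+1 0; rewrite normr0 add0r //.
Qed.
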